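(* Let $b>0$, $\sigma>0$. Let $A\subseteq\mathbb{R}$ be a closed set with smallest element $\theta_*$, and let $c:A\to\mathbb{R}$ be nondecreasing and left-continuous with $c(\theta_* )=0$, $c(x)>0$ for $x\in A$, $x>\theta_*$, and, if $A$ is unbounded, $\inf\{c(x)/x: x\in A,x\ge y\}\uparrow\infty$ as $y\uparrow\infty$. Let $\phi(y)=\sup_{x\in A}\{yx-c(x)\}$ for $y\ge0$; for $p>0$ let $\phi_*(p)=-\inf\{\phi(y):y\in[0,p]\}$ and $F(\gamma,p)=\int_0^p\frac{du}{\phi(u)+\gamma}$ for $\gamma\in(\phi_*(p),\infty)$. Then for each $p>0$ there exists a unique $\gamma(p)\in(\phi_*(p),\infty)$ such that $\tfrac12\sigma^2F(\gamma(p),p)=b$.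
   Context: Under the assumptions, $\phi$ is finite, convex and continuous on $[0,\infty)$, so $\phi_*(p)$ is finite. *)

(* Defs.v *)
From Stdlib Require Import Reals.
From Coquelicot Require Import Coquelicot.
Open Scope R_scope.

(* phi(y) = sup_{x in A} { y x - c(x) }  (finite under the standing assumptions) *)
Definition phi (A : R -> Prop) (c : R -> R) (y : R) : R :=
  real (Lub_Rbar (fun z => exists x, A x /\ z = y * x - c x)).

Definition phistar (A : R -> Prop) (c : R -> R) (p : R) : R :=
  - real (Glb_Rbar (fun z => exists y, 0 <= y <= p /\ z = phi A c y)).

Definition Ffun (A : R -> Prop) (c : R -> R) (gamma p : R) : R :=
  RInt (fun u => / (phi A c u + gamma)) 0 p.

Definition left_continuous_on (A : R -> Prop) (c : R -> R) : Prop :=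
  forall x, A x -> forall eps, 0 < eps -> exists delta, 0 < delta /\
    forall z, A z -> x - delta < z <= x -> Rabs (c z - c x) < eps.

(* Main.v *)
Require Import Defs.
From Stdlib Require Import Reals Rtopology Lra Classical.
From Coquelicot Require Import Coquelicot.
Open Scope R_scope.

Lemma lub_spec (E : R -> Prop) z0 B0 : E z0 -> (forall z, E z -> z <= B0) ->
  (forall z, E z -> z <= real (Lub_Rbar E)) /\
  (forall B, (forall z, E z -> z <= B) -> real (Lub_Rbar E) <= B).
Proof.
  intros Hz HB. destruct (Lub_Rbar_correct E) as [H1 H2].
  destruct (Lub_Rbar E) as [r| |] eqn:Heq.
  - split.
    + intros z Ez. exact (H1 z Ez).
    + intros B HB'. apply (H2 (Finite B)). intros z Ez. exact (HB' z Ez).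
  - exfalso. specialize (H2 (Finite B0)). simpl in H2. apply H2. intros z Ez. exact (HB z Ez).
  - exfalso. specialize (H1 z0 Hz). simpl in H1. exact H1.
Qed.

Lemma glb_spec (E : R -> Prop) z0 B0 : E z0 -> (forall z, E z -> B0 <= z) ->
  (forall z, E z -> real (Glb_Rbar E) <= z) /\
  (forall B, (forall z, E z -> B <= z) -> B <= real (Glb_Rbar E)).
Proof.
  intros Hz HB. destruct (Glb_Rbar_correct E) as [H1 H2].
  destruct (Glb_Rbar E) as [r| |] eqn:Heq.
  - split.
    + intros z Ez. exact (H1 z Ez).
    + intros B HB'. apply (H2 (Finite B)). intros z Ez. exact (HB' z Ez).
  - exfalso. specialize (H1 z0 Hz). simpl in H1. exact H1.
  - exfalso. specialize (H2 (Finite B0)). simpl in H2. apply H2. intros z Ez. exact (HB z Ez).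
Qed.

Lemma bound_K (A : R -> Prop) (c : R -> R) (theta : R)
  (htheta_in : A theta) (htheta_min : forall x, A x -> theta <= x)
  (hc_mono : forall x y, A x -> A y -> x <= y -> c x <= c y)
  (hc_theta : c theta = 0)
  (hc_growth : (~ exists M, forall x, A x -> x <= M) ->
     forall M, exists Y, forall y, Y <= y ->
       forall x, A x -> y <= x -> M <= c x / x) (p : R) (hp : 0 < p) :
  exists K, 0 < K /\ Rabs theta <= K /\
    forall x, A x -> K < x -> forall y, 0 <= y <= p -> y * x - c x <= - p * Rabs theta.
Proof.
  destruct (classic (exists M, forall x, A x -> x <= M)) as [[M HM]|Hun].
  - exists (Rmax 1 (Rmax M (Rabs theta))). repeat split.
    + apply Rlt_le_trans with 1; [lra| apply Rmax_l].
    + eapply Rle_trans; [|apply Rmax_r]. apply Rmax_r.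
    + intros x Ax Hx. exfalso. pose proof (HM x Ax).
      assert (M <= Rmax 1 (Rmax M (Rabs theta))).
      { eapply Rle_trans; [|apply Rmax_r]. apply Rmax_l. }
      lra.
  - destruct (hc_growth Hun (p + 1)) as [Y HY].
    set (K := Rmax 1 (Rmax Y (Rmax (Rabs theta) (p * Rabs theta)))).
    assert (K1 : 1 <= K) by apply Rmax_l.
    assert (KY : Y <= K) by (eapply Rle_trans; [|apply Rmax_r]; apply Rmax_l).
    assert (Kt : Rabs theta <= K) by
      (eapply Rle_trans; [|apply Rmax_r]; eapply Rle_trans; [|apply Rmax_r]; apply Rmax_l).
    assert (Kpt : p * Rabs theta <= K) by
      (eapply Rle_trans; [|apply Rmax_r]; eapply Rle_trans; [|apply Rmax_r]; apply Rmax_r).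
    exists K. repeat split; try lra.
    intros x Ax Hx y Hy.
    assert (H := HY x ltac:(lra) x Ax (Rle_refl x)).
    assert (xpos : 0 < x) by lra.
    assert (Hc : (p + 1) * x <= c x).
    { apply Rmult_le_compat_r with (r := x) in H; [|lra].
      unfold Rdiv in H. rewrite Rmult_assoc, Rinv_l in H; lra. }
    assert (y * x <= p * x) by (apply Rmult_le_compat_r; lra).
    nra.
Qed.

Definition Hyp (A : R -> Prop) (c : R -> R) (theta p K : R) : Prop :=
  0 < p /\ 0 < K /\ Rabs theta <= K /\ A theta /\ (forall x, A x -> theta <= x) /\
  (forall x, A x -> 0 <= c x) /\ c theta = 0 /\
  (forall x, A x -> K < x -> forall y, 0 <= y <= p -> y * x - c x <= - p * Rabs theta).

Lemma term_bound A c theta p K : Hyp A c theta p K ->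
  forall y x, 0 <= y <= p -> A x -> y * x - c x <= p * K.
Proof.
  intros (hp & hK & hKt & hA & hmin & hc0 & hct & hKp) y x Hy Ax.
  destruct (Rle_or_lt x K) as [Hx|Hx].
  - pose proof (hc0 x Ax). assert (y * x <= y * K) by (apply Rmult_le_compat_l; lra).
    assert (y * K <= p * K) by (apply Rmult_le_compat_r; lra). lra.
  - pose proof (hKp x Ax Hx y Hy). pose proof (Rabs_pos theta). nra.
Qed.

Lemma phi_spec A c theta p K : Hyp A c theta p K -> forall y, 0 <= y <= p ->
  (forall x, A x -> y * x - c x <= phi A c y) /\
  (forall B, (forall x, A x -> y * x - c x <= B) -> phi A c y <= B).
Proof.
  intros HH y Hy. pose proof HH as (hp & hK & hKt & hA & hmin & hc0 & hct & hKp).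
  destruct (lub_spec (fun z => exists x, A x /\ z = y * x - c x) (y * theta - c theta) (p * K))
    as [H1 H2].
  - exists theta; auto.
  - intros z [x [Ax ->]]. eapply term_bound; eauto.
  - split.
    + intros x Ax. apply H1. exists x; auto.
    + intros B HB. apply H2. intros z [x [Ax ->]]. auto.
Qed.

Lemma phi_lip A c theta p K : Hyp A c theta p K -> forall y y', 0 <= y <= p -> 0 <= y' <= p ->
  phi A c y <= phi A c y' + K * Rabs (y - y').
Proof.
  intros HH y y' Hy Hy'. pose proof HH as (hp & hK & hKt & hA & hmin & hc0 & hct & hKp).
  destruct (phi_spec _ _ _ _ _ HH y Hy) as [_ H2].
  destruct (phi_spec _ _ _ _ _ HH y' Hy') as [H1 _].
  apply H2. intros x Ax.
  pose proof (Rabs_pos (y - y')).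
  destruct (Rle_or_lt x K) as [Hx|Hx].
  - pose proof (H1 x Ax). pose proof (hmin x Ax).
    assert (Rabs x <= K) by (apply Rabs_le; pose proof (Rabs_pos theta);
      pose proof (Rle_abs (-theta)); rewrite Rabs_Ropp in *; lra).
    assert ((y - y') * x <= Rabs (y - y') * K).
    { eapply Rle_trans; [apply Rle_abs|]. rewrite Rabs_mult.
      apply Rmult_le_compat_l; auto. }
    lra.
  - pose proof (hKp x Ax Hx y Hy). pose proof (H1 theta hA).
    assert (- p * Rabs theta <= y' * theta).
    { pose proof (Rle_abs (-theta)). rewrite Rabs_Ropp in *.
      assert (y' * Rabs theta <= p * Rabs theta) by (apply Rmult_le_compat_r; [apply Rabs_pos|lra]).
      nra. }
    nra.
Qed.

Definition clamp (p u : R) := Rmax 0 (Rmin p u).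

Lemma clamp_in p u : 0 <= p -> 0 <= clamp p u <= p.
Proof. intros. unfold clamp, Rmax, Rmin. repeat destruct Rle_dec; lra. Qed.

Lemma clamp_id p u : 0 <= u <= p -> clamp p u = u.
Proof. intros. unfold clamp, Rmax, Rmin. repeat destruct Rle_dec; lra. Qed.

Lemma clamp_lip p u v : 0 <= p -> Rabs (clamp p u - clamp p v) <= Rabs (u - v).
Proof. intros. unfold clamp, Rmax, Rmin.
  destruct (Rle_or_lt 0 (u - v)); [rewrite (Rabs_pos_eq (u - v))|rewrite (Rabs_left (u-v))]; try lra;
  repeat destruct Rle_dec; apply Rabs_le; lra. Qed.

Definition gphi A c p u := phi A c (clamp p u).

Lemma gphi_lip A c theta p K : Hyp A c theta p K -> forall u v,
  Rabs (gphi A c p u - gphi A c p v) <= K * Rabs (u - v).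
Proof.
  intros HH u v. pose proof HH as (hp & hK & _).
  pose proof (clamp_in p u ltac:(lra)). pose proof (clamp_in p v ltac:(lra)).
  pose proof (phi_lip _ _ _ _ _ HH _ _ H H0).
  pose proof (phi_lip _ _ _ _ _ HH _ _ H0 H).
  pose proof (clamp_lip p u v ltac:(lra)).
  rewrite Rabs_minus_sym in H2. unfold gphi.
  assert (K * Rabs (clamp p u - clamp p v) <= K * Rabs (u - v)) by (apply Rmult_le_compat_l; lra).
  apply Rabs_le. lra.
Qed.

Lemma gphi_cont A c theta p K : Hyp A c theta p K -> forall x, continuity_pt (gphi A c p) x.
Proof.
  intros HH x. pose proof HH as (hp & hK & _).
  unfold continuity_pt, continue_in, limit1_in, limit_in. intros eps Heps.
  exists (eps / K). split. { apply Rdiv_lt_0_compat; lra. }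
  intros y [_ Hy]. simpl in *. unfold R_dist in *.
  eapply Rle_lt_trans. apply (gphi_lip _ _ _ _ _ HH).
  apply Rmult_lt_compat_l with (r := K) in Hy; [|lra].
  unfold Rdiv in Hy. rewrite <- Rmult_assoc, Rinv_r_simpl_m in Hy; lra.
Qed.

Definition Phi (g : R -> R) (p gam : R) : R := RInt (fun u => / (g u + gam)) 0 p.

Lemma cont_f (g : R -> R) m gam : (forall x, continuity_pt g x) -> (forall u, m <= g u) ->
  0 < m + gam -> forall x, continuous (fun u => / (g u + gam)) x.
Proof.
  intros Hg Hm Hpos x. apply continuous_Rinv_comp.
  - apply (continuous_plus g (fun _ => gam)). apply continuity_pt_filterlim. apply Hg.
    apply continuous_const.
  - pose proof (Hm x). lra.
Qed.

Lemma ex_f (g : R -> R) m gam : (forall x, continuity_pt g x) -> (forall u, m <= g u) ->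
  0 < m + gam -> forall a b, ex_RInt (fun u => / (g u + gam)) a b.
Proof. intros. apply (ex_RInt_continuous (V:=R_CompleteNormedModule)). intros. eapply cont_f; eauto. Qed.

Lemma F_lt (g : R -> R) m p g1 g2 : (forall x, continuity_pt g x) -> (forall u, m <= g u) ->
  0 < p -> 0 < m + g1 -> g1 < g2 -> Phi g p g2 < Phi g p g1.
Proof.
  intros Hg Hm hp H1 H2. unfold Phi. apply RInt_lt; auto.
  - intros. eapply cont_f; eauto.
  - intros. eapply cont_f; eauto. lra.
  - intros x _. pose proof (Hm x). apply Rinv_lt_contravar; nra.
Qed.

Lemma F_up (g : R -> R) m p gam : (forall x, continuity_pt g x) -> (forall u, m <= g u) ->
  0 < p -> 0 < m + gam -> Phi g p gam <= p / (m + gam).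
Proof.
  intros Hg Hm hp H1. unfold Phi.
  apply Rle_trans with (RInt (fun _ => / (m + gam)) 0 p).
  - apply RInt_le; try lra. eapply ex_f; eauto. apply ex_RInt_const.
    intros x _. pose proof (Hm x). apply Rinv_le_contravar; lra.
  - rewrite RInt_const. unfold scal; simpl; unfold mult; simpl. unfold Rdiv. lra.
Qed.

Lemma F_lip (g : R -> R) m p g1 ga gb : (forall x, continuity_pt g x) -> (forall u, m <= g u) ->
  0 < p -> 0 < m + g1 -> g1 <= ga -> g1 <= gb ->
  Rabs (Phi g p ga - Phi g p gb) <= p * (Rabs (ga - gb) / (m + g1) ^ 2).
Proof.
  intros Hg Hm hp H1 Ha Hb. unfold Phi.
  assert (Ea := ex_f g m ga Hg Hm ltac:(lra) 0 p).
  assert (Eb := ex_f g m gb Hg Hm ltac:(lra) 0 p).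
  replace (RInt (fun u => / (g u + ga)) 0 p - RInt (fun u => / (g u + gb)) 0 p)
    with (minus (RInt (fun u => / (g u + ga)) 0 p) (RInt (fun u => / (g u + gb)) 0 p)) by reflexivity.
  rewrite <- RInt_minus by auto.
  replace p with (p - 0) at 2 by ring.
  apply abs_RInt_le_const; try lra.
  - apply ex_RInt_minus; auto.
  - intros t _. unfold minus, plus, opp; simpl.
    pose proof (Hm t).
    replace (/ (g t + ga) + - / (g t + gb)) with ((gb - ga) / ((g t + ga) * (g t + gb))) by (field; lra).
    unfold Rdiv. rewrite Rabs_mult, Rabs_minus_sym. apply Rmult_le_compat_l. apply Rabs_pos.
    rewrite Rabs_inv. rewrite Rabs_pos_eq by nra.
    apply Rinv_le_contravar. nra. simpl. rewrite Rmult_1_r.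
    apply Rmult_le_compat; lra.
Qed.

Lemma ln_int_right eps K d u0 : 0 < eps -> 0 < K -> 0 < d ->
  is_RInt (fun u => / (eps + K * (u - u0))) u0 (u0 + d) ((ln (eps + K * d) - ln eps) / K).
Proof.
  intros He HK Hd.
  assert (E : (ln (eps + K * d) - ln eps) / K =
    minus ((fun u => ln (eps + K * (u - u0)) / K) (u0 + d)) ((fun u => ln (eps + K * (u - u0)) / K) u0)).
  { simpl. unfold minus, plus, opp; simpl. replace (u0 + d - u0) with d by ring.
    replace (u0 - u0) with 0 by ring. rewrite Rmult_0_r, Rplus_0_r. field. lra. }
  rewrite E. apply (is_RInt_derive (V:=R_CompleteNormedModule) (fun u => ln (eps + K * (u - u0)) / K)).
  - intros x Hx. rewrite Rmin_left in Hx by lra. rewrite Rmax_right in Hx by lra.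
    auto_derive. nra. field. split; nra.
  - intros x Hx. rewrite Rmin_left in Hx by lra. rewrite Rmax_right in Hx by lra.
    apply continuous_Rinv_comp.
    + apply (continuous_plus (fun _ => eps) (fun u => K * (u - u0))). apply continuous_const.
      apply (continuous_scal_r K (fun u => u - u0)).
      apply (continuous_minus (fun u => u) (fun _ => u0)). apply continuous_id. apply continuous_const.
    + nra.
Qed.

Lemma ln_int_left eps K d u0 : 0 < eps -> 0 < K -> 0 < d ->
  is_RInt (fun u => / (eps + K * (u0 - u))) (u0 - d) u0 ((ln (eps + K * d) - ln eps) / K).
Proof.
  intros He HK Hd.
  assert (E : (ln (eps + K * d) - ln eps) / K =
    minus ((fun u => - ln (eps + K * (u0 - u)) / K) u0) ((fun u => - ln (eps + K * (u0 - u)) / K) (u0 - d))).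
  { simpl. unfold minus, plus, opp; simpl. replace (u0 - (u0 - d)) with d by ring.
    replace (u0 - u0) with 0 by ring. rewrite Rmult_0_r, Rplus_0_r. field. lra. }
  rewrite E. apply (is_RInt_derive (V:=R_CompleteNormedModule) (fun u => - ln (eps + K * (u0 - u)) / K)).
  - intros x Hx. rewrite Rmin_left in Hx by lra. rewrite Rmax_right in Hx by lra.
    auto_derive. nra. field. split; nra.
  - intros x Hx. rewrite Rmin_left in Hx by lra. rewrite Rmax_right in Hx by lra.
    apply continuous_Rinv_comp.
    + apply (continuous_plus (fun _ => eps) (fun u => K * (u0 - u))). apply continuous_const.
      apply (continuous_scal_r K (fun u => u0 - u)).
      apply (continuous_minus (fun _ => u0) (fun u => u)). apply continuous_const. apply continuous_id.
    + nra.
Qed.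

Lemma F_big (g : R -> R) m p K u0 N : (forall x, continuity_pt g x) -> (forall u, m <= g u) ->
  0 < p -> 0 < K -> 0 <= u0 <= p -> g u0 = m ->
  (forall u v, Rabs (g u - g v) <= K * Rabs (u - v)) ->
  exists gam, 0 < m + gam /\ N <= Phi g p gam.
Proof.
  intros Hg Hm hp HK Hu0 Hgu0 Hlip.
  set (N' := Rmax N 0). set (d := p / 2).
  set (eps := K * d * exp (- (K * N'))).
  assert (Hd : 0 < d) by (unfold d; lra).
  assert (He : 0 < eps) by (unfold eps; apply Rmult_lt_0_compat; [nra| apply exp_pos]).
  exists (eps - m). split; [lra|].
  assert (HNN : N <= N') by apply Rmax_l.
  assert (HN0 : 0 <= N') by apply Rmax_r.
  assert (Hval : N' <= (ln (eps + K * d) - ln eps) / K).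
  { unfold eps at 2. rewrite ln_mult by (try apply exp_pos; nra). rewrite ln_exp.
    assert (ln (K * d) <= ln (eps + K * d)) by (apply ln_le; nra).
    apply Rmult_le_reg_r with K; auto. unfold Rdiv. rewrite Rmult_assoc, Rinv_l by lra. nra. }
  assert (Hpos : 0 < m + (eps - m)) by lra.
  assert (EX := ex_f g m (eps - m) Hg Hm Hpos).
  assert (Hge : forall a b, a <= b -> 0 <= RInt (fun u => / (g u + (eps - m))) a b).
  { intros a b Hab. apply RInt_ge_0; auto. intros x _. pose proof (Hm x).
    apply Rlt_le, Rinv_0_lt_compat. lra. }
  apply Rle_trans with N'; auto. eapply Rle_trans; [apply Hval|]. unfold Phi.
  destruct (Rle_or_lt u0 (p / 2)) as [Hc|Hc].
  - pose proof (ln_int_right eps K d u0 He HK Hd) as HI.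
    rewrite <- (RInt_Chasles _ 0 u0 p) by auto.
    rewrite <- (RInt_Chasles _ u0 (u0 + d) p) by auto.
    pose proof (Hge 0 u0 ltac:(lra)). pose proof (Hge (u0 + d) p ltac:(unfold d in *; lra)).
    unfold plus; simpl.
    assert ((ln (eps + K * d) - ln eps) / K <= RInt (fun u => / (g u + (eps - m))) u0 (u0 + d)).
    { rewrite <- (is_RInt_unique _ _ _ _ HI). apply RInt_le; auto. lra. eexists; eauto.
      intros x Hx. pose proof (Hlip x u0). rewrite Hgu0 in H1. pose proof (Hm x).
      rewrite (Rabs_pos_eq (x - u0)) in H1 by lra.
      apply Rinv_le_contravar. lra. apply Rabs_le_between in H1. lra. }
    lra.
  - pose proof (ln_int_left eps K d u0 He HK Hd) as HI.
    rewrite <- (RInt_Chasles _ 0 (u0 - d) p) by auto.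
    rewrite <- (RInt_Chasles _ (u0 - d) u0 p) by auto.
    pose proof (Hge 0 (u0 - d) ltac:(unfold d in *; lra)). pose proof (Hge u0 p ltac:(lra)).
    unfold plus; simpl.
    assert ((ln (eps + K * d) - ln eps) / K <= RInt (fun u => / (g u + (eps - m))) (u0 - d) u0).
    { rewrite <- (is_RInt_unique _ _ _ _ HI). apply RInt_le; auto. lra. eexists; eauto.
      intros x Hx. pose proof (Hlip x u0). rewrite Hgu0 in H1. pose proof (Hm x).
      rewrite (Rabs_left1 (x - u0)) in H1 by lra.
      apply Rinv_le_contravar. lra. apply Rabs_le_between in H1. lra. }
    lra.
Qed.

Lemma lip_cont (f : R -> R) L : 0 < L -> (forall x y, Rabs (f x - f y) <= L * Rabs (x - y)) ->
  continuity f.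
Proof.
  intros HL Hf x.
  unfold continuity_pt, continue_in, limit1_in, limit_in. intros eps Heps.
  exists (eps / L). split. { apply Rdiv_lt_0_compat; lra. }
  intros y [_ Hy]. simpl in *. unfold R_dist in *.
  eapply Rle_lt_trans. apply Hf.
  apply Rmult_lt_compat_l with (r := L) in Hy; [|lra].
  unfold Rdiv in Hy. rewrite <- Rmult_assoc, Rinv_r_simpl_m in Hy; lra.
Qed.

Lemma Rmax_lip a x y : Rabs (Rmax a x - Rmax a y) <= Rabs (x - y).
Proof.
  unfold Rmax.
  destruct (Rle_or_lt 0 (x - y)); [rewrite (Rabs_pos_eq (x - y))|rewrite (Rabs_left (x-y))]; try lra;
  repeat destruct Rle_dec; apply Rabs_le; lra.
Qed.

Theorem corollary1 (b sigma : R) (A : R -> Prop) (c : R -> R) (theta : R)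
  (hb : 0 < b) (hsigma : 0 < sigma)
  (hA_closed : closed_set A)
  (htheta_in : A theta) (htheta_min : forall x, A x -> theta <= x)
  (hc_mono : forall x y, A x -> A y -> x <= y -> c x <= c y)
  (hc_left : left_continuous_on A c)
  (hc_theta : c theta = 0)
  (hc_pos : forall x, A x -> theta < x -> 0 < c x)
  (hc_growth : (~ exists M, forall x, A x -> x <= M) ->
     forall M, exists Y, forall y, Y <= y ->
       forall x, A x -> y <= x -> M <= c x / x) :
  forall p, 0 < p ->
    exists! gamma, phistar A c p < gamma /\
      / 2 * sigma ^ 2 * Ffun A c gamma p = b.
Proof.
  intros p hp.
  assert (hc0 : forall x, A x -> 0 <= c x).
  { intros x Ax. rewrite <- hc_theta. apply hc_mono; auto. }
  destruct (bound_K A c theta htheta_in htheta_min hc_mono hc_theta hc_growth p hp)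
    as (K & hK & hKt & hKp).
  assert (HH : Hyp A c theta p K) by (repeat split; auto).
  set (g := gphi A c p).
  assert (Hg : forall x, continuity_pt g x) by apply (gphi_cont _ _ _ _ _ HH).
  assert (Hlip : forall u v, Rabs (g u - g v) <= K * Rabs (u - v)) by apply (gphi_lip _ _ _ _ _ HH).
  destruct (continuity_ab_min g 0 p ltac:(lra) (fun x _ => Hg x)) as (u0 & Hmin & Hu0).
  set (m := g u0).
  assert (Hm : forall u, m <= g u).
  { intros u. pose proof (clamp_in p u ltac:(lra)).
    replace (g u) with (g (clamp p u)). apply Hmin; auto.
    unfold g, gphi. rewrite (clamp_id p (clamp p u)); auto. }
  assert (Hgu0 : g u0 = m) by reflexivity.
  assert (Hphi : forall x, 0 <= x <= p -> phi A c x = g x).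
  { intros x Hx. unfold g, gphi. rewrite clamp_id; auto. }
  assert (Hstar : phistar A c p = - m).
  { unfold phistar. f_equal.
    assert (E1 : exists y, 0 <= y <= p /\ m = phi A c y).
    { exists u0. split; auto. rewrite Hphi; auto. }
    assert (E2 : forall z, (exists y, 0 <= y <= p /\ z = phi A c y) -> m <= z).
    { intros z [y [Hy ->]]. rewrite Hphi; auto. }
    destruct (glb_spec (fun z => exists y, 0 <= y <= p /\ z = phi A c y) m m E1 E2) as [H1 H2].
    apply Rle_antisym.
    + apply H1. exact E1.
    + apply H2. exact E2. }
  assert (HF : forall gam, Ffun A c gam p = Phi g p gam).
  { intros gam. unfold Ffun, Phi. apply RInt_ext. intros x Hx.
    rewrite Rmin_left in Hx by lra. rewrite Rmax_right in Hx by lra. rewrite Hphi; auto; lra. }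
  set (T := 2 * b / sigma ^ 2).
  assert (HT : 0 < T) by (unfold T; apply Rdiv_lt_0_compat; [lra| apply pow_lt; lra]).
  assert (Heq : forall gam, / 2 * sigma ^ 2 * Phi g p gam = b <-> Phi g p gam = T).
  { intros gam. assert (0 < sigma ^ 2) by (apply pow_lt; lra). unfold T. split; intros E.
    - rewrite <- E. field. lra.
    - rewrite E. field. lra. }
  destruct (F_big g m p K u0 (T + 1) Hg Hm hp hK Hu0 Hgu0 Hlip) as (ga & Hga & HFa).
  set (gb := ga + p / T + 1).
  assert (HFb : Phi g p gb < T).
  { eapply Rle_lt_trans. apply (F_up g m p gb Hg Hm hp). unfold gb.
    assert (0 < p / T) by (apply Rdiv_lt_0_compat; lra). lra.
    unfold gb. apply Rmult_lt_reg_r with (m + (ga + p / T + 1)).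
    assert (0 < p / T) by (apply Rdiv_lt_0_compat; lra). lra.
    unfold Rdiv. rewrite Rmult_assoc, Rinv_l.
    2:{ assert (0 < p / T) by (apply Rdiv_lt_0_compat; lra). lra. }
    replace (T * (m + (ga + p * / T + 1))) with (T * (m + ga + 1) + p) by (field; lra).
    nra. }
  set (f := fun x => T - Phi g p (Rmax ga x)).
  assert (Hfc : continuity f).
  { apply (lip_cont f (p * / (m + ga) ^ 2)).
    - apply Rmult_lt_0_compat; auto. apply Rinv_0_lt_compat. apply pow_lt. lra.
    - intros x y. unfold f.
      replace (T - Phi g p (Rmax ga x) - (T - Phi g p (Rmax ga y)))
        with (- (Phi g p (Rmax ga x) - Phi g p (Rmax ga y))) by ring.
      rewrite Rabs_Ropp. eapply Rle_trans.
      apply (F_lip g m p ga); auto; apply Rmax_l.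
      unfold Rdiv. rewrite (Rmult_comm (Rabs _)), <- Rmult_assoc.
      apply Rmult_le_compat_l. apply Rmult_le_pos; [lra|]. apply Rlt_le, Rinv_0_lt_compat, pow_lt; lra.
      apply Rmax_lip. }
  assert (Hgab : ga < gb) by (unfold gb; assert (0 < p / T) by (apply Rdiv_lt_0_compat; lra); lra).
  destruct (IVT f ga gb Hfc Hgab) as (z & Hz & Hfz).
  { unfold f. rewrite Rmax_left by lra. lra. }
  { unfold f. rewrite Rmax_right by lra. lra. }
  unfold f in Hfz. rewrite Rmax_right in Hfz by lra.
  exists z. split.
  - rewrite Hstar, HF, Heq. split; lra.
  - intros g' [Hg1 Hg2]. rewrite Hstar in Hg1. rewrite HF, Heq in Hg2.
    destruct (Rtotal_order z g') as [Hl|[He|Hl]]; auto.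
    + pose proof (F_lt g m p z g' Hg Hm hp ltac:(lra) Hl). lra.
    + pose proof (F_lt g m p g' z Hg Hm hp ltac:(lra) Hl). lra.
Qed.
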